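(* Let $A\in\mathbb{R}^{n\times n}$ be monotone and let $A=P_1-R_1+S_1=P_2-R_2+S_2=P_3-R_3+S_3=P_4-R_4+S_4$ be four double weak regular splittings of $A$. Suppose $1\notin\sigma(S_2P_1^{-1})$ and $1\notin\sigma(S_4P_3^{-1})$. Define $\widehat{A}_1=(I-S_2P_1^{-1})A$, $\widehat{P}_1=P_2$, $\widehat{R}_1=R_2-S_2P_1^{-1}R_1$, and $\widehat{A}_2=(I-S_4P_3^{-1})A$, $\widehat{P}_2=P_4$, $\widehat{R}_2=R_4-S_4P_3^{-1}R_3$, and suppose $\widehat{A}_i^{-1}\geq 0$ for $i=1,2$. If $\widehat{P}_1^{-1}\widehat{A}_1\geq\widehat{P}_2^{-1}\widehat{A}_2$ and $\widehat{P}_1^{-1}\widehat{R}_1\geq\widehat{P}_2^{-1}\widehat{R}_2$, then $\rho(W_{12})\leq\rho(W_{34})<1$, where $$W_{12}=\begin{pmatrix} P_2^{-1}R_2-P_2^{-1}S_2P_1^{-1}R_1 & P_2^{-1}S_2P_1^{-1}S_1\\ I & 0\end{pmatrix},\qquad W_{34}=\begin{pmatrix} P_4^{-1}R_4-P_4^{-1}S_4P_3^{-1}R_3 & P_4^{-1}S_4P_3^{-1}S_3\\ I & 0\end{pmatrix}.$$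
   Context: Inequalities are entrywise; $\rho$ is the spectral radius, $\sigma$ the spectrum. $A$ is monotone if $A$ is nonsingular and $A^{-1}\geq 0$. A double splitting $A=P-R+S$ with $P$ nonsingular is a double weak regular splitting if $P^{-1}\geq 0$, $P^{-1}R\geq0$, $P^{-1}S\leq0$. *)

(* Defs.v *)
From HB Require Import structures.
From mathcomp Require Import all_boot all_order all_algebra.
From mathcomp Require Import complex.
From mathcomp Require Import classical_sets reals.
Set Implicit Arguments. Unset Strict Implicit. Unset Printing Implicit Defensive.
Import Order.TTheory GRing.Theory Num.Theory.
Local Open Scope ring_scope.

Section Defs.
Variable R : realType.

Definition mx_le (m n : nat) (A B : 'M[R]_(m, n)) : Prop :=
  forall i j, A i j <= B i j.
Definition mx_ge0 (m n : nat) (A : 'M[R]_(m, n)) : Prop := mx_le 0 A.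
Definition mx_le0 (m n : nat) (A : 'M[R]_(m, n)) : Prop := mx_le A 0.

Definition monotone_mx (n : nat) (A : 'M[R]_n) : Prop :=
  A \in unitmx /\ mx_ge0 (invmx A).

Definition cmx (n : nat) (A : 'M[R]_n) : 'M[R[i]]_n :=
  map_mx (fun x => (x%:C)%C) A.

Definition spectrum (n : nat) (A : 'M[R]_n) : set R[i] :=
  [set z | eigenvalue (cmx A) z].

Definition spectral_radius (n : nat) (A : 'M[R]_n) : R :=
  sup [set Normc.normc z | z in spectrum A].

Definition dwr_splitting (n : nat) (A P Rm S : 'M[R]_n) : Prop :=
  [/\ A = P - Rm + S, P \in unitmx, mx_ge0 (invmx P),
      mx_ge0 (invmx P *m Rm) & mx_le0 (invmx P *m S)].

Definition W_mx (n : nat) (P1 R1 S1 P2 R2 S2 : 'M[R]_n) : 'M[R]_(n + n) :=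
  block_mx (invmx P2 *m R2 - invmx P2 *m S2 *m invmx P1 *m R1)
           (invmx P2 *m S2 *m invmx P1 *m S1)
           1%:M 0.
End Defs.

(* Main.v *)
Require Import Defs.
From HB Require Import structures.
From mathcomp Require Import all_boot all_order all_algebra.
From mathcomp Require Import complex.
From mathcomp Require Import boolp classical_sets reals ring lra.
Import Order.TTheory GRing.Theory Num.Theory.
Local Open Scope ring_scope.
Set Implicit Arguments. Unset Strict Implicit.
Section SR.
Variable R : realType.
Local Notation C := R[i].
Local Notation nc := (@Normc.normc R).

Lemma nc_ge0 (z : C) : 0 <= nc z.
Proof. by case: z => a b /=; rewrite sqrtr_ge0. Qed.

Lemma nc_real (x : R) : nc (x%:C)%C = `|x|.
Proof. by rewrite /= expr0n /= addr0 sqrtr_sqr. Qed.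

Lemma eig_roots N (A : 'M[R]_N) :
  exists rs : seq C, forall z, eigenvalue (cmx A) z -> z \in rs.
Proof.
have [rs Hrs] := closed_field_poly_normal (char_poly (cmx A)).
exists rs => z; rewrite eigenvalue_root_char Hrs (monicP (char_poly_monic _)).
by rewrite scale1r root_prod_XsubC.
Qed.

Lemma big_max_ub (f : C -> R) rs z :
  z \in rs -> f z <= \big[Num.max/0]_(w <- rs) f w.
Proof.
elim: rs => //= w rs IH; rewrite in_cons big_cons le_max.
by case/orP=> [/eqP->|/IH->]; rewrite ?lexx ?orbT.
Qed.

Lemma big_max_lt (f : C -> R) rs c : 0 < c -> (forall w, f w < c) ->
  \big[Num.max/0]_(w <- rs) f w < c.
Proof.
by move=> c0 H; elim: rs => [|w rs IH]; rewrite ?big_nil ?big_cons ?gt_max ?H.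
Qed.

Lemma big_max_ge0 (f : C -> R) rs : 0 <= \big[Num.max/0]_(w <- rs) f w.
Proof.
by elim: rs => [|w rs IH]; rewrite ?big_nil ?big_cons ?le_max ?IH ?orbT.
Qed.

Lemma SR_ub N (A : 'M[R]_N) : has_ubound [set nc z | z in spectrum A].
Proof.
have [rs Hrs] := eig_roots A.
exists (\big[Num.max/0]_(w <- rs) nc w) => _ [z Hz <-].
exact: big_max_ub (Hrs _ Hz).
Qed.

Lemma SR_ge N (A : 'M[R]_N) z : eigenvalue (cmx A) z -> nc z <= spectral_radius A.
Proof.
move=> Hz; apply: sup_upper_bound; last by exists z.
by split; [exists (nc z); exists z | exact: SR_ub].
Qed.

Lemma SR_le N (A : 'M[R]_N) c : 0 <= c ->
  (forall z, eigenvalue (cmx A) z -> nc z <= c) -> spectral_radius A <= c.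
Proof.
move=> c0 H; rewrite /spectral_radius.
have [ne|e] := pselect ([set nc z | z in spectrum A] !=set0)%classic.
  by apply: ge_sup => // _ [z Hz <-]; exact: H.
suff -> : ([set nc z | z in spectrum A] = set0)%classic by rewrite sup0.
by apply/seteqP; split => // x Sx; apply: e; exists x.
Qed.

Lemma SR_ge0 N (A : 'M[R]_N) : 0 <= spectral_radius A.
Proof.
rewrite /spectral_radius.
have [[_ [z Hz _]]|e] := pselect ([set nc z | z in spectrum A] !=set0)%classic.
  exact: le_trans (nc_ge0 z) (SR_ge Hz).
suff -> : ([set nc z | z in spectrum A] = set0)%classic by rewrite sup0.
by apply/seteqP; split => // x Sx; apply: e; exists x.
Qed.

Lemma SR_lt N (A : 'M[R]_N) c : 0 < c ->
  (forall z, eigenvalue (cmx A) z -> nc z < c) -> spectral_radius A < c.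
Proof.
move=> c0 H; have [rs Hrs] := eig_roots A.
pose f w := if eigenvalue (cmx A) w then nc w else 0.
apply: (le_lt_trans _ (big_max_lt rs c0 (f := f) _)); last first.
  by move=> w; rewrite /f; case: ifP => // /H.
apply: SR_le; first exact: big_max_ge0.
move=> z Hz; apply: le_trans (big_max_ub f (Hrs _ Hz)).
by rewrite /f Hz.
Qed.
End SR.
Section Mx.
Variable R : realType.
Implicit Types (m n p : nat).

Lemma mx_le_refl m n (A : 'M[R]_(m,n)) : mx_le A A.
Proof. by move=> i j. Qed.

Lemma mx_le_trans m n (A B C : 'M[R]_(m,n)) : mx_le A B -> mx_le B C -> mx_le A C.
Proof. by move=> H1 H2 i j; exact: le_trans (H1 i j) (H2 i j). Qed.

Lemma mx_le_add m n (A B C D : 'M[R]_(m,n)) : mx_le A B -> mx_le C D -> mx_le (A + C) (B + D).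
Proof. by move=> H1 H2 i j; rewrite !mxE lerD. Qed.

Lemma mx_le_sub m n (A B : 'M[R]_(m,n)) : mx_le A B <-> mx_ge0 (B - A).
Proof.
by split=> H i j; move: (H i j); rewrite !mxE ?subr_ge0.
Qed.

Lemma mx_ge0_mul m n p (A : 'M[R]_(m,n)) (B : 'M[R]_(n,p)) :
  mx_ge0 A -> mx_ge0 B -> mx_ge0 (A *m B).
Proof.
move=> HA HB i j; rewrite !mxE; apply: sumr_ge0 => k _.
by apply: mulr_ge0; [move: (HA i k) | move: (HB k j)]; rewrite mxE.
Qed.

Lemma mx_le_mull m n p (A : 'M[R]_(m,n)) (B C : 'M[R]_(n,p)) :
  mx_ge0 A -> mx_le B C -> mx_le (A *m B) (A *m C).
Proof.
move=> HA H i j; rewrite !mxE; apply: ler_sum => k _.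
by apply: ler_wpM2l; [move: (HA i k); rewrite mxE | exact: H].
Qed.

Lemma mx_le_mulr m n p (A B : 'M[R]_(m,n)) (C : 'M[R]_(n,p)) :
  mx_ge0 C -> mx_le A B -> mx_le (A *m C) (B *m C).
Proof.
move=> HC H i j; rewrite !mxE; apply: ler_sum => k _.
by apply: ler_wpM2r; [move: (HC k j); rewrite mxE | exact: H].
Qed.

Lemma mx_le_scale m n (a : R) (A B : 'M[R]_(m,n)) :
  0 <= a -> mx_le A B -> mx_le (a *: A) (a *: B).
Proof. by move=> a0 H i j; rewrite !mxE ler_wpM2l. Qed.

Lemma mx_ge0_exp n (B : 'M[R]_n) k : mx_ge0 B -> mx_ge0 (B ^+ k).
Proof.
move=> HB; elim: k => [|k IH]; last by rewrite exprS -mulmxE; exact: mx_ge0_mul.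
by move=> i j; rewrite expr0 !mxE; case: (i == j).
Qed.

Lemma L1 n (A P Nm : 'M[R]_n) (y : 'cV[R]_n) :
  A \in unitmx -> mx_ge0 (invmx A) -> P \in unitmx -> mx_ge0 (invmx P) ->
  A = P - Nm -> mx_ge0 (invmx P *m Nm) -> mx_ge0 y ->
  mx_le y (invmx P *m Nm *m y) -> y = 0.
Proof.
move=> Au Ai Pu Pi AE B0 y0 yBy.
set B := invmx P *m Nm in B0 yBy.
pose w := map_mx (fun x : R => `|x|) (Nm *m y).
pose X := invmx A *m w.
have w0 : mx_ge0 w by move=> i j; rewrite !mxE normr_ge0.
have X0 : mx_ge0 X by exact: mx_ge0_mul.
have H1 : mx_le y (invmx P *m w).
  apply: (mx_le_trans yBy); rewrite /B -mulmxA; apply: mx_le_mull => // i j.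
  by rewrite /w [X in _ <= X]mxE ler_norm.
have H2 : invmx P *m w = X - B *m X.
  have -> : X - B *m X = (1%:M - B) *m invmx A *m w.
    by rewrite /X !mulmxA mulmxBl mul1mx mulmxBl.
  have -> : 1%:M - B = invmx P *m A.
    by rewrite AE mulmxBr mulVmx.
  by rewrite -(mulmxA (invmx P)) mulmxV // mulmx1.
have H3 : forall k, mx_le (k%:R *: y) (X - B ^+ k *m X).
  elim=> [|k IH].
    by rewrite scale0r expr0 mul1mx subrr; exact: mx_le_refl.
  have E : X - B ^+ k.+1 *m X = (X - B *m X) + B *m (X - B ^+ k *m X).
    by rewrite mulmxBr exprS -mulmxE !mulmxA addrA subrK.
  rewrite E -H2 -natr1 scalerDl scale1r addrC; apply: mx_le_add => //.
  apply: (mx_le_trans (B := B *m (k%:R *: y))); last exact: mx_le_mull.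
  rewrite -scalemxAr; apply: mx_le_scale => //; exact: ler0n.
have H4 : forall k, mx_le (k%:R *: y) X.
  move=> k; apply: (mx_le_trans (H3 k)) => i j.
  have := mx_ge0_mul (mx_ge0_exp k B0) X0 i j; rewrite !mxE => h; rewrite lerBlDr lerDl //.
apply/matrixP => i j; rewrite mxE; apply/eqP; rewrite eq_le.
have -> : 0 <= y i j by move: (y0 i j); rewrite mxE.
rewrite andbT; rewrite leNgt; apply/negP => yi.
have Xi0 : 0 <= X i j by move: (X0 i j); rewrite mxE.
have := H4 (Num.Def.archi_bound (X i j / y i j)) i j; rewrite mxE.
have := archi_boundP (divr_ge0 Xi0 (ltW yi)).
rewrite ltr_pdivrMr // => h1 h2.
by have := lt_le_trans h1 h2; rewrite ltxx.
Qed.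

Local Notation C := R[i].
Local Notation nc := (@Normc.normc R).

Lemma nc_ge0' (z : C) : 0 <= nc z.
Proof. by case: z => a b /=; rewrite sqrtr_ge0. Qed.

Lemma nc_real' (x : R) : nc (x%:C)%C = `|x|.
Proof. by rewrite /= expr0n /= addr0 sqrtr_sqr. Qed.

Lemma nc_sum n (F : 'I_n -> C) : nc (\sum_(j < n) F j) <= \sum_(j < n) nc (F j).
Proof.
elim/big_ind2: _ => //; first by rewrite Normc.normc0.
by move=> a b c d h1 h2; apply: le_trans (le_normcD _ _) _; exact: lerD.
Qed.

Lemma eig_col (F : fieldType) N (A : 'M[F]_N) z : eigenvalue A z ->
  exists2 v : 'cV_N, v != 0 & A *m v = z *: v.
Proof.
move/eigenvalueP => [v Hv v0].
have: \det (z%:M - A) == 0.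
  by apply/det0P; exists v => //; rewrite mulmxBr Hv mul_mx_scalar subrr.
rewrite -det_tr => /det0P [w w0 Hw].
exists w^T; first by rewrite trmx_eq0.
have := congr1 trmx Hw; rewrite trmx_mul trmxK trmx0 mulmxBl mul_scalar_mx.
by move/eqP; rewrite subr_eq0 => /eqP.
Qed.

Lemma block_eig n (T U : 'M[R]_n) z : mx_ge0 T -> mx_ge0 U ->
  eigenvalue (cmx (block_mx T U 1%:M 0)) z ->
  exists2 y : 'cV[R]_n, (mx_ge0 y /\ y != 0) &
     forall i, nc z ^+ 2 * y i 0 <= \sum_j (nc z * T i j + U i j) * y j 0.
Proof.
move=> T0 U0 /eig_col [v v0 Hv].
rewrite -[v]vsubmxK /cmx map_block_mx mul_block_col scale_col_mx in Hv.
case/eq_col_mx: Hv => Htop Hbot.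
set v1 := usubmx v in Htop Hbot; set v2 := dsubmx v in Htop Hbot.
have E1 : v1 = z *: v2.
  rewrite -Hbot; apply/matrixP => i j; rewrite !mxE.
  rewrite (bigD1 i) //= big1 ?addr0; last first.
    by move=> k /negbTE ki; rewrite !mxE eq_sym ki /= mul0r.
  rewrite big1 ?addr0; last by move=> k _; rewrite !mxE mul0r.
  by rewrite !mxE eqxx /= mul1r.
have v20 : v2 != 0.
  apply: contraNneq v0 => e; rewrite -[v]vsubmxK -/v1 -/v2 E1 e scaler0.
  by rewrite col_mx0.
clearbody v1 v2.
exists (map_mx nc v2).
  split; first by move=> i j; rewrite !mxE nc_ge0'.
  apply: contra v20 => /eqP/matrixP e; apply/eqP/matrixP => i j.
  by have := e i j; rewrite !mxE => /Normc.eq0_normc.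
move=> i; rewrite mxE.
have := congr1 (fun M : 'cV[C]_n => M i 0) Htop; rewrite E1 !mxE => Hi.
have -> : nc z ^+ 2 * nc (v2 i 0) = nc (z * (z * v2 i 0)).
  by rewrite !Normc.normcM mulrA expr2.
rewrite -Hi -big_split /=; apply: le_trans (nc_sum _) _.
apply: ler_sum => j _; rewrite !mxE mulrA -mulrDl Normc.normcM.
apply: ler_wpM2r; first exact: nc_ge0'.
apply: le_trans (le_normcD _ _) _; rewrite Normc.normcM !nc_real'.
have t0 : 0 <= T i j by move: (T0 i j); rewrite mxE.
have u0 : 0 <= U i j by move: (U0 i j); rewrite mxE.
by rewrite (ger0_norm t0) (ger0_norm u0) mulrC.
Qed.

Lemma lemma_a n (Ah Ph Nh T U : 'M[R]_n) z :
  Ah \in unitmx -> mx_ge0 (invmx Ah) -> Ph \in unitmx -> mx_ge0 (invmx Ph) ->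
  Ah = Ph - Nh -> invmx Ph *m Nh = T + U -> mx_ge0 T -> mx_ge0 U ->
  eigenvalue (cmx (block_mx T U 1%:M 0)) z -> nc z < 1.
Proof.
move=> Au Ai Pu Pi AE BE T0 U0 Hz; rewrite ltNge; apply/negP => r1.
have [y [y0 yn0] Hy] := block_eig T0 U0 Hz.
apply/negP: yn0; rewrite negbK; apply/eqP.
apply: (L1 Au Ai Pu Pi AE); rewrite ?BE //.
  by move=> i j; rewrite !mxE addr_ge0 //; [move: (T0 i j) | move: (U0 i j)]; rewrite mxE.
move=> i j; rewrite [j]ord1.
set r := nc z.
have r2 : 0 < r ^+ 2 by rewrite exprn_gt0 // (lt_le_trans ltr01 r1).
rewrite -(ler_pM2l r2); apply: le_trans (Hy i) _.
rewrite !mxE mulr_sumr; apply: ler_sum => k _; rewrite mulrA !mxE.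
have yk : 0 <= y k 0 by move: (y0 k 0); rewrite mxE.
apply: ler_wpM2r => //; rewrite mulrDr.
have t0 : 0 <= T i k by move: (T0 i k); rewrite mxE.
have u0 : 0 <= U i k by move: (U0 i k); rewrite mxE.
have rr : r <= r ^+ 2 by rewrite expr2 ler_peMr // (le_trans ler01 r1).
have r21 : 1 <= r ^+ 2 by apply: le_trans r1 rr.
apply: lerD; first exact: ler_wpM2r.
by rewrite ler_peMl.
Qed.
End Mx.
Section Rec.
Variable R : realType.
Local Notation C := R[i].
Local Notation nc := (@Normc.normc R).

Lemma ncge0 (z : C) : 0 <= nc z.
Proof. by case: z => a b /=; rewrite sqrtr_ge0. Qed.

Definition op (l : C) (a : nat -> C) := fun k => a k.+1 - l * a k.
Definition tends0 (a : nat -> C) :=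
  forall e : R, 0 < e -> exists K, forall k, (K <= k)%N -> nc (a k) < e.

Lemma foldr_op_comm l rs a k : foldr op (op l a) rs k = op l (foldr op a rs) k.
Proof.
elim: rs k => [|l' rs IH] k //=.
rewrite /op !IH /op; ring.
Qed.

Lemma geometric (q c : R) : 0 <= q -> q < 1 -> 0 < c -> exists J, q ^+ J < c.
Proof.
move=> q0 q1 c0; have [->|qn0] := eqVneq q 0; first by exists 1%N; rewrite expr1.
have qp : 0 < q by rewrite lt_def qn0.
set h := q^-1 - 1.
have hp : 0 < h by rewrite /h subr_gt0 invf_gt1.
have bern : forall J, 1 + J%:R * h <= (1 + h) ^+ J.
  elim=> [|J IH]; first by rewrite mul0r addr0 expr0.
  rewrite exprS; apply: le_trans (ler_wpM2l _ IH); last by rewrite addr_ge0 // ltW.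
  have : 0 <= J%:R * h * h by rewrite mulr_ge0 ?mulr_ge0 ?ler0n // ltW.
  rewrite -natr1; set x := J%:R => hx.
  have -> : (1 + h) * (1 + x * h) = 1 + (x + 1) * h + x * h * h by ring.
  by rewrite lerDl.
exists (Num.Def.archi_bound (c^-1 / h)).
have cV0 : 0 <= c^-1 by rewrite invr_ge0 ltW.
have := archi_boundP (divr_ge0 cV0 (ltW hp)).
set J := Num.Def.archi_bound _ => HJ.
have H1 : c^-1 < (q ^+ J)^-1.
  rewrite -exprVn.
  have -> : q^-1 = 1 + h by rewrite /h addrC subrK.
  apply: lt_le_trans (bern J); apply: (lt_le_trans (y := J%:R * h)).
    by rewrite -ltr_pdivrMr.
  by rewrite lerDr ler01.
by rewrite -ltf_pV2 // posrE exprn_gt0.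
Qed.

Lemma tends0_step l a : nc l < 1 -> tends0 (op l a) -> tends0 a.
Proof.
move=> l1 H e e0; set q := nc l.
have q0 : 0 <= q := ncge0 l.
have d0 : 0 < e * (1 - q) / 2 by rewrite divr_gt0 // mulr_gt0 // subr_gt0.
have [K HK] := H _ d0.
set B := nc (a K).
have B0 : 0 <= B := ncge0 _.
have Hj : forall j, nc (a (K + j)%N) <= q ^+ j * B + e / 2.
  elim=> [|j IH].
    by rewrite addn0 expr0 mul1r lerDl divr_ge0 // ltW.
  have E : a (K + j.+1)%N = l * a (K + j)%N + op l a (K + j)%N.
    by rewrite /op addnS addrC subrK.
  rewrite E; apply: le_trans (le_normcD _ _) _; rewrite Normc.normcM.
  have h := HK (K + j)%N (leq_addr _ _).
  apply: le_trans (lerD (ler_wpM2l q0 IH) (ltW h)) _.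
  by rewrite le_eqVlt; apply/orP; left; apply/eqP; rewrite exprS; field.
have [J HJ] := geometric q0 l1 (divr_gt0 (divr_gt0 e0 (ltr0Sn _ 1)) (ltr_wpDl B0 ltr01)).
exists (K + J)%N => k Hk.
rewrite -(subnK Hk) addnC -addnA; apply: le_lt_trans (Hj _) _.
rewrite -ltrBrDr.
have eh : e - e / 2 = e / 2 by field.
rewrite eh exprD.
have qm : q ^+ (k - (K + J)) <= 1 by rewrite exprn_ile1 // ltW.
apply: (le_lt_trans (y := q ^+ J * B)).
  rewrite -mulrA ler_wpM2l ?exprn_ge0 //.
  by rewrite ler_piMl // mulr_ge0 // exprn_ge0.
apply: (le_lt_trans (y := q ^+ J * (B + 1))).
  by rewrite ler_wpM2l ?exprn_ge0 // lerDl.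
by rewrite -ltr_pdivlMr ?ltr_wpDl.
Qed.

Lemma tends0_roots rs a : (forall l, l \in rs -> nc l < 1) ->
  (forall k, foldr op a rs k = 0) -> tends0 a.
Proof.
elim: rs a => [|l rs IH] a Hl H.
  move=> e e0; exists 0%N => k _; have -> : a k = 0 := H k.
  by rewrite Normc.normc0.
apply: (tends0_step (Hl l (mem_head _ _))); apply: IH.
  by move=> l' h; apply: Hl; rewrite in_cons h orbT.
by move=> k; rewrite foldr_op_comm; exact: H k.
Qed.
End Rec.
Section Fin.
Variable R : realType.
Local Notation C := R[i].
Local Notation nc := (@Normc.normc R).

Lemma foldr_mx N (M : 'M[C]_N) (x : 'rV_N) (u : 'cV_N) rs k :
  foldr (@op R) (fun k => (x *m M ^+ k *m u) 0 0) rs k =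
  (x *m M ^+ k *m \prod_(l <- rs) (M - l%:M) *m u) 0 0.
Proof.
elim: rs k => [|l rs IH] k /=; first by rewrite big_nil mulmx1.
rewrite /op !IH big_cons -mulmxE mulmxBl mul_scalar_mx mulmxBr.
rewrite mulmxBl -scalemxAr -scalemxAl [RHS]mxE [X in _ = _ + X]mxE.
rewrite [X in _ = _ - X]mxE; congr (_ - _).
by rewrite exprSr -mulmxE !mulmxA.
Qed.

Lemma cmx_exp N (M : 'M[R]_N) k : cmx (M ^+ k) = cmx M ^+ k.
Proof.
elim: k => [|k IH].
  by apply/matrixP => i j; rewrite !mxE; case: (i == j).
by rewrite !exprS -!mulmxE /cmx map_mxM; congr (_ *m _); exact: IH.
Qed.

Lemma pow_subinv N (M : 'M[R]_N) (u : 'cV[R]_N) k :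
  mx_ge0 M -> mx_le u (M *m u) -> mx_le u (M ^+ k *m u).
Proof.
move=> M0 Mu; elim: k => [|k IH]; first by rewrite expr0 mul1mx; exact: mx_le_refl.
apply: (mx_le_trans IH); rewrite exprSr -mulmxE -mulmxA.
exact: mx_le_mull (mx_ge0_exp k M0) Mu.
Qed.

Lemma no_subinv N (M : 'M[R]_N) (u : 'cV[R]_N) i :
  mx_ge0 M -> 0 < u i 0 -> mx_le u (M *m u) ->
  (forall l, eigenvalue (cmx M) l -> nc l < 1) -> False.
Proof.
case: N M u i => [|N] M u i; first by case: i.
move=> M0 ui Mu Heig.
have [rs Hrs] := closed_field_poly_normal (char_poly (cmx M)).
rewrite (monicP (char_poly_monic _)) scale1r in Hrs.
pose x : 'rV[C]_N.+1 := delta_mx 0 i.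
pose cu : 'cV[C]_N.+1 := map_mx (real_complex R) u.
pose a k := (x *m (cmx M) ^+ k *m cu) 0 0.
have Hz : forall k, foldr (@op R) a rs k = 0.
  move=> k; rewrite /a foldr_mx.
  suff -> : \prod_(l <- rs) (cmx M - l%:M) = 0 by rewrite mulmx0 mul0mx mxE.
  have := Cayley_Hamilton (cmx M); rewrite Hrs rmorph_prod /= => <-.
  by apply: eq_bigr => l _; rewrite rmorphB /= horner_mx_X horner_mx_C.
have Hl : forall l, l \in rs -> nc l < 1.
  by move=> l lrs; apply: Heig; rewrite eigenvalue_root_char Hrs root_prod_XsubC.
have [K HK] := tends0_roots Hl Hz ui.
have := HK K (leqnn K).
rewrite /a -cmx_exp /x -rowE.
have -> : (row i (cmx (M ^+ K)) *m cu) 0 0 = (((M ^+ K) *m u) i 0)%:C%C.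
  rewrite !mxE rmorph_sum; apply: eq_bigr => j _; rewrite !mxE rmorphM //.
rewrite /= expr0n /= addr0 sqrtr_sqr.
have := pow_subinv K M0 Mu i 0; rewrite mxE => h.
rewrite ger0_norm; last by apply: le_trans h; exact: ltW.
by rewrite ltNge h.
Qed.
End Fin.
Section Main.
Variable R : realType.
Local Notation C := R[i].
Local Notation nc := (@Normc.normc R).

Lemma mx_le0_ge0_mul m n p (A : 'M[R]_(m,n)) (B : 'M[R]_(n,p)) :
  mx_le0 A -> mx_ge0 B -> mx_le0 (A *m B).
Proof.
move=> HA HB i j; rewrite !mxE; apply: (big_ind (fun x => x <= 0)) => //.
  by move=> x y hx hy; rewrite -oppr_ge0 opprD addr_ge0 // oppr_ge0.
move=> k _; apply: mulr_le0_ge0; [move: (HA i k) | move: (HB k j)]; rewrite mxE //.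
Qed.

Lemma mx_le0_le0_mul m n p (A : 'M[R]_(m,n)) (B : 'M[R]_(n,p)) :
  mx_le0 A -> mx_le0 B -> mx_ge0 (A *m B).
Proof.
move=> HA HB i j; rewrite !mxE; apply: sumr_ge0 => k _.
by apply: mulr_le0; [move: (HA i k) | move: (HB k j)]; rewrite mxE.
Qed.

Lemma block_ge0 n (A B C D : 'M[R]_n) :
  mx_ge0 A -> mx_ge0 B -> mx_ge0 C -> mx_ge0 D -> mx_ge0 (block_mx A B C D).
Proof.
move=> hA hB hC hD i j; rewrite [X in X <= _]mxE /block_mx mxE.
case: splitP => k _; rewrite mxE; case: splitP => l _.
- by move: (hA k l); rewrite mxE.
- by move: (hB k l); rewrite mxE.
- by move: (hC k l); rewrite mxE.
- by move: (hD k l); rewrite mxE.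
Qed.

Lemma col_le n (a b c d : 'cV[R]_n) :
  mx_le a c -> mx_le b d -> mx_le (col_mx a b) (col_mx c d).
Proof.
move=> h1 h2 i j; rewrite !mxE; case: splitP => k _; [exact: h1 | exact: h2].
Qed.

Lemma split_alg n (P2 R2 S2 X Y : 'M[R]_n) :
  (P2 - R2 + S2) - (S2 - X + Y) = P2 - (R2 - X + Y).
Proof. by apply/matrixP => i j; rewrite !mxE; ring. Qed.

Lemma hat_facts n (A P1 R1 S1 P2 R2 S2 : 'M[R]_n) :
  dwr_splitting A P1 R1 S1 -> dwr_splitting A P2 R2 S2 ->
  let T := invmx P2 *m R2 - invmx P2 *m S2 *m invmx P1 *m R1 in
  let U := invmx P2 *m S2 *m invmx P1 *m S1 in
  let Nm := R2 - S2 *m invmx P1 *m R1 + S2 *m invmx P1 *m S1 in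
  [/\ (1%:M - S2 *m invmx P1) *m A = P2 - Nm, invmx P2 *m Nm = T + U,
      mx_ge0 T, mx_ge0 U & invmx P2 *m (R2 - S2 *m invmx P1 *m R1) = T].
Proof.
case=> AE1 P1u P1i P1R P1S [AE2 P2u P2i P2R P2S] T U Nm.
split.
- have E : S2 *m invmx P1 *m A = S2 - S2 *m invmx P1 *m R1 + S2 *m invmx P1 *m S1.
    rewrite {1}AE1 mulmxDr mulmxBr -(mulmxA S2 (invmx P1) P1) mulVmx //.
    by rewrite mulmx1.
  by rewrite mulmxBl mul1mx E {1}AE2 split_alg.
- by rewrite /Nm /T /U mulmxDr mulmxBr !mulmxA.
- rewrite /T -[_ *m R1]mulmxA => i j.
  have h1 := P2R i j; have h2 := mx_le0_ge0_mul P2S P1R i j.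
  move: h1 h2; rewrite !mxE => h1 h2; rewrite subr_ge0.
  exact: le_trans h2 h1.
- by rewrite /U -mulmxA; apply: mx_le0_le0_mul.
- by rewrite /T mulmxBr !mulmxA.
Qed.

Lemma mx_ge0_1 n : mx_ge0 (1%:M : 'M[R]_n).
Proof. by move=> i j; rewrite !mxE; case: (i == j). Qed.

Lemma mx_ge0_0 m n : mx_ge0 (0 : 'M[R]_(m,n)).
Proof. by move=> i j. Qed.

Lemma compare n (T1 U1 T2 U2 : 'M[R]_n) z :
  mx_ge0 T1 -> mx_ge0 U1 -> mx_ge0 T2 -> mx_ge0 U2 ->
  mx_le T2 T1 -> mx_le (T1 + U1) (T2 + U2) -> nc z < 1 ->
  eigenvalue (cmx (block_mx T1 U1 1%:M 0)) z ->
  nc z <= spectral_radius (block_mx T2 U2 1%:M 0).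
Proof.
move=> T10 U10 T20 U20 hT hTU z1 Hz.
set r := nc z; rewrite leNgt; apply/negP => hlt.
have r0 : 0 < r := le_lt_trans (SR_ge0 _) hlt.
have [y [y0 yn0] Hy] := block_eig T10 U10 Hz.
have [i0 yi0] : exists i, 0 < y i 0.
  case: (pselect (exists i, 0 < y i 0)) => // hn; exfalso.
  apply/negP: yn0; rewrite negbK; apply/eqP/matrixP => i j; rewrite [j]ord1 mxE.
  apply/eqP; rewrite eq_le; have := y0 i 0; rewrite mxE => ->; rewrite andbT.
  by rewrite leNgt; apply/negP => h; apply: hn; exists i.
set W := block_mx T2 U2 1%:M 0.
pose u := col_mx (r *: y) y.
pose M := r^-1 *: W.
have W0 : mx_ge0 W.
  by apply: block_ge0 => //; first [exact: mx_ge0_1 | exact: (@mx_ge0_0 n n)].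
apply: (no_subinv (M := M) (u := u) (i := rshift n i0)).
- move=> i j; rewrite mxE [X in _ <= X]mxE mulr_ge0 ?invr_ge0 ?(ltW r0) //.
  by have := W0 i j; rewrite mxE.
- by rewrite /u col_mxEd.
- have key : mx_le (r *: u) (W *m u).
    rewrite /u /W mul_block_col scale_col_mx mul1mx mul0mx addr0.
    apply: col_le; last exact: mx_le_refl.
    move=> i j; rewrite [j]ord1 !mxE mulrA -expr2; apply: le_trans (Hy i) _.
    rewrite -big_split /=; apply: ler_sum => k _; rewrite !mxE.
    rewrite mulrA [T2 i k * r]mulrC -mulrDl; apply: ler_wpM2r.
      by have := y0 k 0; rewrite mxE.
    have h1 := hT i k; have h2 := hTU i k; rewrite !mxE in h1 h2.
    have h3 : 0 <= (1 - r) * (T1 i k - T2 i k).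
      by rewrite mulr_ge0 // subr_ge0 // ltW.
    rewrite -/r; nra.
  rewrite /M -scalemxAl; apply: mx_le_trans (mx_le_scale _ key).
    by rewrite scalerA mulVf ?scale1r ?gt_eqF //; exact: mx_le_refl.
  by rewrite invr_ge0 ltW.
- move=> l /eigenvalueP [v Hv vn0].
  have : eigenvalue (cmx W) ((r%:C)%C * l).
    apply/eigenvalueP; exists v => //.
    have -> : cmx W = (r%:C)%C *: cmx M.
      apply/matrixP => i j; rewrite !mxE rmorphM /= mulrA -rmorphM /=.
      by rewrite mulfV ?gt_eqF // mul1r.
    by rewrite -scalemxAr Hv scalerA.
  move/SR_ge; rewrite Normc.normcM nc_real' (ger0_norm (ltW r0)) => h.
  by rewrite -(ltr_pM2l r0) mulr1; exact: le_lt_trans h hlt.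
Qed.

Lemma mx_le_1B n (A B : 'M[R]_n) : mx_le (1%:M - B) (1%:M - A) -> mx_le A B.
Proof. by move=> h i j; have := h i j; rewrite !mxE lerD2l lerN2. Qed.
End Main.

Unset Implicit Arguments.
Unset Strict Implicit.

Theorem corollary3p14 (R : realType) (n : nat)
  (A P1 R1 S1 P2 R2 S2 P3 R3 S3 P4 R4 S4 : 'M[R]_n) :
  monotone_mx A ->
  dwr_splitting A P1 R1 S1 -> dwr_splitting A P2 R2 S2 ->
  dwr_splitting A P3 R3 S3 -> dwr_splitting A P4 R4 S4 ->
  ~ spectrum (S2 *m invmx P1) 1 ->
  ~ spectrum (S4 *m invmx P3) 1 ->
  let Ahat1 := (1%:M - S2 *m invmx P1) *m A in
  let Phat1 := P2 in
  let Rhat1 := R2 - S2 *m invmx P1 *m R1 in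
  let Ahat2 := (1%:M - S4 *m invmx P3) *m A in
  let Phat2 := P4 in
  let Rhat2 := R4 - S4 *m invmx P3 *m R3 in
  monotone_mx Ahat1 -> monotone_mx Ahat2 ->
  mx_le (invmx Phat2 *m Ahat2) (invmx Phat1 *m Ahat1) ->
  mx_le (invmx Phat2 *m Rhat2) (invmx Phat1 *m Rhat1) ->
  spectral_radius (W_mx P1 R1 S1 P2 R2 S2) <= spectral_radius (W_mx P3 R3 S3 P4 R4 S4)
  /\ spectral_radius (W_mx P3 R3 S3 P4 R4 S4) < 1.
Proof.
move=> _ sp1 sp2 sp3 sp4 _ _ Ahat1 Phat1 Rhat1 Ahat2 Phat2 Rhat2
  [A1u A1i] [A2u A2i] HleA HleR.
have [E1 BE1 T10 U10 TE1] := hat_facts sp1 sp2.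
have [E2 BE2 T20 U20 TE2] := hat_facts sp3 sp4.
have [_ P2u P2i _ _] := sp2.
have [_ P4u P4i _ _] := sp4.
set T1 := invmx P2 *m R2 - invmx P2 *m S2 *m invmx P1 *m R1 in BE1 T10 TE1.
set U1 := invmx P2 *m S2 *m invmx P1 *m S1 in BE1 U10.
set T2 := invmx P4 *m R4 - invmx P4 *m S4 *m invmx P3 *m R3 in BE2 T20 TE2.
set U2 := invmx P4 *m S4 *m invmx P3 *m S3 in BE2 U20.
have eq1 : invmx Phat1 *m Ahat1 = 1%:M - (T1 + U1).
  by rewrite /Phat1 /Ahat1 E1 mulmxBr mulVmx // BE1.
have eq2 : invmx Phat2 *m Ahat2 = 1%:M - (T2 + U2).
  by rewrite /Phat2 /Ahat2 E2 mulmxBr mulVmx // BE2.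
have hT : mx_le T2 T1 by move: HleR; rewrite /Phat1 /Phat2 /Rhat1 /Rhat2 TE1 TE2.
have hTU : mx_le (T1 + U1) (T2 + U2).
  by apply: mx_le_1B; move: HleA; rewrite eq1 eq2.
rewrite /Ahat1 E1 in A1u A1i; rewrite /Ahat2 E2 in A2u A2i.
have h12 : forall z, eigenvalue (cmx (block_mx T1 U1 1%:M 0)) z -> Normc.normc z < 1.
  move=> z Hz; exact: (lemma_a A1u A1i P2u P2i (erefl _) BE1 T10 U10 Hz).
have h34 : forall z, eigenvalue (cmx (block_mx T2 U2 1%:M 0)) z -> Normc.normc z < 1.
  move=> z Hz; exact: (lemma_a A2u A2i P4u P4i (erefl _) BE2 T20 U20 Hz).
rewrite /W_mx -/T1 -/U1 -/T2 -/U2.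
split.
- apply: SR_le; first exact: SR_ge0.
  move=> z Hz; apply: (compare T10 U10 T20 U20 hT hTU (h12 z Hz) Hz).
- apply: SR_lt; first exact: ltr01.
  exact: h34.
Qed.
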